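(* Let $m>0$, $V=[-m/2,m/2]$, and let $F$ be the CDF of a distribution $P\in\mathcal{P}$. Then for every $\ell\in V$, $$|F^{-1}(0.5)-\ell|\le 2m\,|0.5-F(\ell)|.$$
   Context: A distribution $P$ on $V$ with density $f_P$ and CDF $F_P$ is single-peaked at $\ell$ if $f_P(x)\le f_P(y)$ whenever $x\le y\le\ell$ or $x\ge y\ge\ell$. $\mathcal{P}$ is the class of absolutely continuous distributions on $V$ that are single-peaked at their median $F_P^{-1}(0.5)$ (a point $t$ with $F_P(t)=1/2$). *)

(* Defs.v *)
From HB Require Import structures.
From mathcomp Require Import all_boot all_order all_algebra.
From mathcomp Require Import all_classical all_reals all_analysis.
Set Implicit Arguments. Unset Strict Implicit. Unset Printing Implicit Defensive.
Import Order.TTheory GRing.Theory Num.Theory.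
Local Open Scope classical_set_scope.
Local Open Scope ring_scope.

Definition Vint (R : realType) (m : R) : set R := `[- (m / 2), m / 2]%classic.

(* f is the (Lebesgue) density of an absolutely continuous probability
   distribution on V: nonnegative, measurable, vanishing outside V,
   total mass 1. *)
Definition is_density_on (R : realType) (m : R) (f : R -> R) : Prop :=
  [/\ measurable_fun setT f,
      (forall x, 0 <= f x),
      (forall x, ~ Vint m x -> f x = 0) &
      (\int[@lebesgue_measure R]_(x in setT) (f x)%:E = 1)%E].

Definition cdf_dens (R : realType) (f : R -> R) (x : R) : R :=
  fine (\int[@lebesgue_measure R]_(y in `]-oo, x]%classic) (f y)%:E).

Definition single_peaked (R : realType) (f : R -> R) (l : R) : Prop :=
  forall x y, (x <= y <= l) || (l <= y <= x) -> f x <= f y.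

(* P belongs to the class \mathcal{P}, with median t: absolutely continuous
   on V, F(t) = 1/2, and single-peaked at t. *)
Definition in_class_P (R : realType) (m : R) (f : R -> R) (t : R) : Prop :=
  [/\ is_density_on m f, cdf_dens f t = 1 / 2 & single_peaked f t].

(* Main.v *)
Require Import Defs.
From mathcomp Require Import all_boot all_order all_algebra.
From mathcomp Require Import all_classical all_reals all_analysis.
From mathcomp Require Import measurable_realfun.
From mathcomp Require Import lra.
Import Order.TTheory GRing.Theory Num.Theory.
Set Implicit Arguments. Unset Strict Implicit.
Local Open Scope classical_set_scope.
Local Open Scope ring_scope.

Local Notation mu := (@lebesgue_measure _).


Lemma mfE (R : realType) (f : R -> R) (D : set R) :
  measurable_fun setT f -> measurable_fun D (EFin \o f).
Proof.
move=> mf; apply/measurable_EFinP.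
exact: (measurable_funS _ _ mf).
Qed.

Lemma split_int (R : realType) (f : R -> R) (A B : set R) :
  measurable_fun setT f -> (forall x, 0 <= f x) -> measurable A -> measurable B ->
  [disjoint A & B] ->
  (\int[mu]_(x in A `|` B) (f x)%:E = \int[mu]_(x in A) (f x)%:E + \int[mu]_(x in B) (f x)%:E)%E.
Proof.
move=> mf f0 mA mB dAB; apply: ge0_integral_setU => //.
- exact: mfE.
- by move=> x _; rewrite lee_fin.
Qed.

Lemma int_ub (R : realType) (f : R -> R) (D : set R) (u v c : R) :
  measurable_fun setT f -> (forall x, 0 <= f x) -> measurable D -> 0 <= c -> u <= v ->
  (forall x, D x -> f x <= c * \1_`[u, v] x) ->
  (\int[mu]_(x in D) (f x)%:E <= (c * (v - u))%:E)%E.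
Proof.
move=> mf f0 mD c0 uv H.
have mi : measurable_fun setT (EFin \o (fun x => c * \1_`[u, v] x)).
  apply/measurable_EFinP; apply: measurable_funM; first exact: measurable_cst.
  exact: measurable_indic.
apply: (@le_trans _ _ (\int[mu]_(x in D) (c * \1_`[u, v] x)%:E)%E).
  apply: ge0_le_integral => //; try (by move=> x _; rewrite lee_fin);
    try exact: mfE; try exact: (measurable_funS _ _ mi).
apply: (@le_trans _ _ (\int[mu]_(x in setT) (c * \1_`[u, v] x)%:E)%E).
  apply: ge0_subset_integral => //.
  by move=> x _; rewrite lee_fin mulr_ge0.
have E1 : (\int[mu]_(x in setT) (c * \1_`[u, v] x)%:E =
    c%:E * \int[mu]_(x in setT) (\1_`[u, v] x)%:E)%E.
  apply: (@integralZl_indic _ _ _ mu setT measurableT (fun=> `[u, v]%classic) c) => //.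
  by move=> /lt_geF; rewrite c0.
rewrite E1.
rewrite integral_indic // setIT.
have L := lebesgue_measure_itv `[u, v].
rewrite /= lte_fin in L.
suff : (c%:E * mu `[u, v]%classic <= (c * (v - u))%:E)%E by [].
move: L; case: ltgtP uv => // [uv' _|<- _] L; rewrite L.
  by rewrite -EFinD EFinM.
by rewrite subrr mulr0 mule0.
Qed.

Lemma int_lb (R : realType) (f : R -> R) (u v c : R) :
  measurable_fun setT f -> 0 <= c -> u <= v ->
  (forall x, u < x <= v -> c <= f x) ->
  ((c * (v - u))%:E <= \int[mu]_(x in `]u, v]) (f x)%:E)%E.
Proof.
move=> mf c0 uv H.
apply: (@le_trans _ _ (\int[mu]_(x in `]u, v]) (cst c%:E x))%E); last first.
  apply: ge0_le_integral => //; try (by move=> x _; rewrite lee_fin);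
    try exact: mfE.
rewrite integral_cst //.
suff : ((c * (v - u))%:E <= c%:E * mu `]u, v]%classic)%E by [].
have L := lebesgue_measure_itv `]u, v].
rewrite /= lte_fin in L.
move: L; case: ltgtP uv => // [uv' _|<- _] L; rewrite L.
  by rewrite -EFinD EFinM.
by rewrite subrr mulr0 mule0.
Qed.

Lemma finE (R : realType) (m : R) (f : R -> R) (D : set R) :
  is_density_on m f -> measurable D ->
  (\int[mu]_(x in D) (f x)%:E)%E = (fine (\int[mu]_(x in D) (f x)%:E))%:E /\
  0 <= fine (\int[mu]_(x in D) (f x)%:E).
Proof.
case=> mf f0 _ f1 mD.
have h0 : (0 <= \int[mu]_(x in D) (f x)%:E)%E.
  by apply: integral_ge0 => x _; rewrite lee_fin.
have h1 : (\int[mu]_(x in D) (f x)%:E <= 1)%E.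
  rewrite -f1; apply: ge0_subset_integral => //.
  - exact: mfE.
  - by move=> x _; rewrite lee_fin.
have fin : (\int[mu]_(x in D) (f x)%:E)%E \is a fin_num.
  by rewrite ge0_fin_numE // (le_lt_trans h1) // ltey.
by split; [rewrite fineK | apply: fine_ge0].
Qed.


Lemma disj_ivl (R : realType) (x y z : R) :
  [disjoint `]-oo, x] & `]y, z]] -> True.
Proof. by []. Qed.

Lemma disj1 (R : realType) (x z : R) : [disjoint `]-oo, x]%classic & `]x, z]%classic].
Proof.
apply/eqP; apply/seteqP; split => u //=; rewrite !in_itv /= => -[ux /andP[xu _]].
by move: (lt_le_trans xu ux); rewrite ltxx.
Qed.

Lemma disj2 (R : realType) (x : R) : [disjoint `]-oo, x]%classic & `]x, +oo[%classic].
Proof. by rewrite /disj_set -setCitvl setICr. Qed.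

Lemma splitT (R : realType) (x : R) : setT = `]-oo, x]%classic `|` `]x, +oo[%classic.
Proof. by rewrite -setCitvl setUCr. Qed.

Lemma split2 (R : realType) (x y : R) : x <= y ->
  `]-oo, y]%classic = `]-oo, x]%classic `|` `]x, y]%classic.
Proof. by move=> xy; rewrite (@itv_bndbnd_setU _ _ _ (BRight x)) // bnd_simp. Qed.

Theorem lemma7p17 (R : realType) (m : R) (f : R -> R) (t : R) :
  0 < m -> in_class_P m f t ->
  forall l : R, Vint m l ->
    `|t - l| <= 2 * m * `|1 / 2 - cdf_dens f l|.
Proof.
move=> m0 [dens Ft sp] l Vl.
have [mf f0 fout f1] := dens.
move: (Vl); rewrite /Vint /= in_itv /= => /andP[al lb].
pose E (D : set R) := (\int[mu]_(x in D) (f x)%:E)%E.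
have Ef D : measurable D -> E D = (fine (E D))%:E := fun mD => (finE dens mD).1.
have Eg D : measurable D -> 0 <= fine (E D) := fun mD => (finE dens mD).2.
have fsplit A B : measurable A -> measurable B -> [disjoint A & B] ->
    fine (E (A `|` B)) = fine (E A) + fine (E B).
  move=> mA mB d; rewrite /E split_int // -/(E A) -/(E B).
  by rewrite (Ef A) // (Ef B) // -EFinD.
have FT : fine (E setT) = 1 by rewrite /E f1.
have cdfE x : cdf_dens f x = fine (E `]-oo, x]%classic) by [].
have tb : t <= m / 2.
  rewrite leNgt; apply/negP => bt.
  have E0 : E `]t, +oo[%classic = 0%E.
    rewrite /E (eq_integral (cst 0%E)) ?integral0 // => x.
    rewrite inE /= in_itv /= andbT => tx.
    rewrite fout //= /Vint /= in_itv /= => /andP[_ xb].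
    by move: (lt_trans bt tx); rewrite ltNge xb.
  move: Ft; rewrite cdfE.
  have := fsplit _ _ (measurable_itv `]-oo, t]) (measurable_itv `]t, +oo[) (disj2 t).
  rewrite -splitT FT E0 /= addr0 => <- h; lra.
have ta : - (m / 2) <= t.
  rewrite leNgt; apply/negP => ta.
  have E0 : E `]-oo, t]%classic = 0%E.
    rewrite /E (eq_integral (cst 0%E)) ?integral0 // => x.
    rewrite inE /= in_itv /= => xt.
    rewrite fout //= /Vint /= in_itv /= => /andP[ax _].
    by move: (le_lt_trans ax (le_lt_trans xt ta)); rewrite ltxx.
  by move: Ft; rewrite cdfE E0 /= => h; lra.
set c := f l.
have c0 : 0 <= c := f0 l.
rewrite cdfE in Ft *.
case: (ltgtP l t) => [lt|tl|->]; last first.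
- by rewrite subrr normr0 mulr_ge0 // mulr_ge0 // ltW.
-
  have sp1 := fsplit _ _ (measurable_itv `]-oo, t]) (measurable_itv `]t, l]) (disj1 t l).
  rewrite -split2 ?ltW // in sp1.
  have sp2 := fsplit _ _ (measurable_itv `]-oo, l]) (measurable_itv `]l, +oo[) (disj2 l).
  rewrite -splitT FT in sp2.
  have ub : (E `]l, +oo[%classic <= (c * (m / 2 - l))%:E)%E.
    apply: int_ub => // x; rewrite /= in_itv /= andbT => lx.
    rewrite indicE; have [xb|xb] := leP x (m / 2).
      rewrite mem_set; last by rewrite /= in_itv /= (ltW lx) xb.
      by rewrite mulr1; apply: sp; rewrite (ltW tl) (ltW lx) orbT.
    rewrite fout; first by rewrite mulr_ge0.
    rewrite /Vint /= in_itv /= => /andP[_ h].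
    by move: (le_lt_trans h xb); rewrite ltxx.
  have lbd : ((c * (l - t))%:E <= E `]t, l]%classic)%E.
    apply: int_lb => //; first exact: ltW.
    by move=> x /andP[tx xl]; apply: sp; rewrite (ltW tx) xl orbT.
  rewrite (Ef _ (measurable_itv _)) lee_fin in ub.
  rewrite (Ef _ (measurable_itv _)) lee_fin in lbd.
  have I0 := Eg _ (measurable_itv `]t, l]).
  have J0 := Eg _ (measurable_itv `]l, +oo[).
  move: sp1 sp2 ub lbd I0 J0.
  set F := fine (E `]-oo, l]%classic).
  set I := fine (E `]t, l]%classic).
  set J := fine (E `]l, +oo[%classic).
  rewrite Ft => sp1 sp2 ub lbd I0 J0.
  have -> : `|t - l| = l - t by rewrite ltr0_norm ?subr_lt0 // opprB.
  have -> : 1 / 2 - F = - I by rewrite sp1; lra.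
  rewrite normrN ger0_norm //.
  have k1 : (m / 2 - l) * (c * (l - t)) <= (m / 2 - l) * I.
    by apply: ler_wpM2l => //; lra.
  have k2 : (l - t) * J <= (l - t) * (c * (m / 2 - l)).
    by apply: ler_wpM2l => //; lra.
  have k3 : (m / 2 - t) * I <= m * I.
    by apply: ler_wpM2r => //; lra.
  have k4 : (l - t) * (I + J) = (l - t) / 2.
    have -> : I + J = 1 / 2 by lra.
    by rewrite mul1r.
  lra.
-
  have sp1 := fsplit _ _ (measurable_itv `]-oo, l]) (measurable_itv `]l, t]) (disj1 l t).
  rewrite -split2 ?ltW // in sp1.
  have ub : (E `]-oo, l]%classic <= (c * (l - - (m / 2)))%:E)%E.
    apply: int_ub => // x; rewrite /= in_itv /= => xl.
    rewrite indicE; have [xa|xa] := leP (- (m / 2)) x.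
      rewrite mem_set; last by rewrite /= in_itv /= xa xl.
      by rewrite mulr1; apply: sp; rewrite xl (ltW lt).
    rewrite fout; first by rewrite mulr_ge0.
    rewrite /Vint /= in_itv /= => /andP[h _].
    by move: (le_lt_trans h xa); rewrite ltxx.
  have lbd : ((c * (t - l))%:E <= E `]l, t]%classic)%E.
    apply: int_lb => //; first exact: ltW.
    by move=> x /andP[lx xt]; apply: sp; rewrite (ltW lx) xt.
  rewrite (Ef _ (measurable_itv _)) lee_fin in ub.
  rewrite (Ef _ (measurable_itv _)) lee_fin in lbd.
  have I10 := Eg _ (measurable_itv `]-oo, l]).
  have I20 := Eg _ (measurable_itv `]l, t]).
  move: sp1 ub lbd I10 I20.
  set I1 := fine (E `]-oo, l]%classic).
  set I2 := fine (E `]l, t]%classic).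
  rewrite Ft => sp1 ub lbd I10 I20.
  have -> : `|t - l| = t - l by rewrite gtr0_norm // subr_gt0.
  have -> : 1 / 2 - I1 = I2 by rewrite sp1; lra.
  rewrite ger0_norm //.
  have k1 : (l + m / 2) * (c * (t - l)) <= (l + m / 2) * I2.
    by apply: ler_wpM2l => //; lra.
  have k2 : (t - l) * I1 <= (t - l) * (c * (l - - (m / 2))).
    by apply: ler_wpM2l => //; lra.
  have k3 : (t + m / 2) * I2 <= m * I2.
    by apply: ler_wpM2r => //; lra.
  have k4 : (t - l) * (I1 + I2) = (t - l) / 2.
    by rewrite -sp1 mul1r.
  lra.
Qed.
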